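(* Let $S_{(1,1)}(x)=\sum_{p\ge1}\binom{2p}{p}x^{2p}$ be the generating function of nonempty $(1,1)$-balanced words over two letters, and $C_{(1,1)}(x)$ the generating function of $(1,1)$-balanced necklaces (by length). Then $$C_{(1,1)}(x)=\sum_{n\ge1}\frac{\varphi(n)}{n}\sum_{p\ge1}\frac{1}{2p}\binom{2p}{p}x^{2np},\qquad x\,C_{(1,1)}'(x)=\sum_{n\ge1}\varphi(n)\,S_{(1,1)}(x^n).$$ Equivalently, the pointed class $\Theta Cyc_{(1,1)}$ is isomorphic (same number of objects of each size) to $\sum_{n>0}\varphi(n)\,Rep_n(Seq_{(1,1)})$. *)

(* Defs.v *)
From HB Require Import structures.
From mathcomp Require Import all_boot all_order all_algebra.
Set Implicit Arguments. Unset Strict Implicit. Unset Printing Implicit Defensive.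
Import Order.TTheory GRing.Theory Num.Theory.

Definition balanced (N : nat) (w : N.-tuple bool) : bool :=
  count_mem true w == count_mem false w.

Definition necklace_of (N : nat) (w : N.-tuple bool) : {set N.-tuple bool} :=
  [set rot_tuple i w | i : 'I_N].

Definition balanced_necklaces (N : nat) : {set {set N.-tuple bool}} :=
  [set necklace_of w | w in [pred w : N.-tuple bool | balanced w]].

(* C_N : coefficient of x^N in C_(1,1)(x). *)
Definition Ccoef (N : nat) : nat := #|balanced_necklaces N|.

(* S_m : coefficient of x^m in S_(1,1)(x) = sum_{p>=1} C(2p,p) x^(2p). *)
Definition Scoef (m : nat) : nat :=
  if (0 < m) && ~~ odd m then 'C(m, m./2) else 0.

(* Main.v *)
Require Import Defs.
From HB Require Import structures.
From mathcomp Require Import all_boot all_order all_algebra all_fingroup.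
Import Order.TTheory GRing.Theory Num.Theory.
From Stdlib Require Import Lia.


Section Seqs.
Variable x0 : bool.

Lemma nth_rot s m i : m <= size s -> i < size s ->
  nth x0 (rot m s) i = nth x0 s ((i + m) %% size s).
Proof.
move=> Hm Hi; rewrite /rot nth_cat size_drop; case: ltnP => H.
- rewrite nth_drop modn_small ?(addnC m) //.
  move/ssrnat.leP: Hm => Hm; move/ssrnat.leP: Hi => Hi; move/ssrnat.leP: H => H; apply/ssrnat.leP.
  rewrite -?minusE -?plusE in H *; lia.
- have E : (i + m) %% size s = i + m - size s.
    rewrite -{1}(subnK (_ : size s <= i + m)) ?modnDr ?modn_small //.
    + move/ssrnat.leP: Hm => Hm; move/ssrnat.leP: Hi => Hi; move/ssrnat.leP: H => H; apply/ssrnat.leP.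
      rewrite -?minusE -?plusE in H *; lia.
    + move/ssrnat.leP: Hm => Hm; move/ssrnat.leP: Hi => Hi; move/ssrnat.leP: H => H; apply/ssrnat.leP.
      rewrite -?minusE -?plusE in H *; lia.
  rewrite E nth_take.
    congr nth; move/ssrnat.leP: Hm => Hm; move/ssrnat.leP: Hi => Hi; move/ssrnat.leP: H => H.
    rewrite -?minusE -?plusE in H *; lia.
  move/ssrnat.leP: Hm => Hm; move/ssrnat.leP: Hi => Hi; move/ssrnat.leP: H => H; apply/ssrnat.leP.
  rewrite -?minusE -?plusE in H *; lia.
Qed.

Lemma periodic_mul (f : nat -> bool) p : (forall i, f (i + p) = f i) ->
  forall m i, f (i + m * p) = f i.
Proof.
move=> Hf; elim=> [|m IH] i; first by rewrite mul0n addn0.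
by rewrite mulSn addnA IH Hf.
Qed.

Arguments periodic_mul {f p}.

Lemma rot_fixP s a (N := size s) (g := gcdn a (size s)) : 0 < size s -> a < size s ->
  (rot a s == s) = [forall i : 'I_(size s), nth x0 s i == nth x0 s (i %% g)].
Proof.
move=> HN Ha.
have gN : g %| size s by apply: dvdn_gcdr.
have ga : g %| a by apply: dvdn_gcdl.
apply/eqP/forallP => [Hr|Hp].
- pose f i := nth x0 s (i %% size s).
  have Hfa : forall i, f (i + a) = f i.
    move=> i; rewrite /f -modnDml.
    have Hi : i %% size s < size s by rewrite ltn_mod.
    by rewrite -nth_rot ?Hr // ltnW.
  have HfN : forall i, f (i + size s) = f i by move=> i; rewrite /f modnDr.
  have Hfg : forall i, f (i + g) = f i.
    move=> i; have [x _ /dvdnP [c Hc]] := Bezoutl a HN.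
    rewrite -(periodic_mul Hfa x) -addnA /g gcdnC Hc.
    by rewrite (periodic_mul HfN).
  move=> i; apply/eqP.
  have : f i = f (i %% g).
    by rewrite {1}(divn_eq i g) addnC (periodic_mul Hfg).
  have E1 : f i = nth x0 s i by rewrite /f modn_small.
  have E2 : f (i %% g) = nth x0 s (i %% g).
    by rewrite /f modn_small // (leq_ltn_trans (leq_mod _ _) (ltn_ord i)).
  by rewrite -E1 -E2.
- apply: (@eq_from_nth _ x0); rewrite ?size_rot // => i Hi.
  rewrite nth_rot ?(ltnW Ha) //.
  have H1 := eqP (Hp (Ordinal Hi)).
  have H2 : (i + a) %% size s < size s by rewrite ltn_mod.
  rewrite (eqP (Hp (Ordinal H2))) /= H1; congr nth.
  by rewrite (modn_dvdm _ gN) -(divnK ga) addnC modnMDl.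
Qed.
End Seqs.

Section Flat.
Variable x0 : bool.

Lemma nth_flatten_nseq (u : seq bool) k i : i < k * size u ->
  nth x0 (flatten (nseq k u)) i = nth x0 u (i %% size u).
Proof.
elim: k i => [|k IH] i; first by rewrite mul0n.
rewrite mulSn /= nth_cat => Hi; case: ltnP => H.
  by rewrite modn_small.
rewrite IH; last by rewrite ltn_subLR.
by rewrite -{2}(subnK H) modnDr.
Qed.

Lemma size_flatten_nseq (u : seq bool) k : size (flatten (nseq k u)) = k * size u.
Proof. by elim: k => //= k IH; rewrite size_cat IH mulSn. Qed.

Lemma count_flatten_nseq (P : pred bool) (u : seq bool) k :
  count P (flatten (nseq k u)) = k * count P u.
Proof. by elim: k => //= k IH; rewrite count_cat IH mulSn. Qed.

Lemma take_flatten_nseq (u : seq bool) k : 0 < k ->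
  take (size u) (flatten (nseq k u)) = u.
Proof. by case: k => //= k _; rewrite take_size_cat. Qed.

Lemma rot_fix_flat (s : seq bool) a (g := gcdn a (size s)) : 0 < size s -> a < size s ->
  (rot a s == s) = (s == flatten (nseq (size s %/ g) (take g s))).
Proof.
move=> HN Ha; rewrite (rot_fixP x0) //.
have gN : g %| size s by apply: dvdn_gcdr.
have g0 : 0 < g by rewrite gcdn_gt0 HN orbT.
have gle : g <= size s by apply: dvdn_leq.
have szt : size (take g s) = g by rewrite size_takel.
have Nk : size s %/ g * g = size s by rewrite divnK.
apply/forallP/eqP => [Hp|Hs].
- apply: (@eq_from_nth _ x0); rewrite ?size_flatten_nseq ?szt ?Nk // => i Hi.
  rewrite nth_flatten_nseq ?szt ?Nk // nth_take ?ltn_mod //.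
  exact: (eqP (Hp (Ordinal Hi))).
- move=> [i Hi0] /=; apply/eqP.
  have E : forall j, nth x0 s j = nth x0 (flatten (nseq (size s %/ g) (take g s))) j.
    by move=> j; rewrite {1}Hs.
  have Hi : i < size s %/ g * size (take g s) by rewrite szt Nk.
  have Hi' : i %% g < size s %/ g * size (take g s).
    by rewrite szt Nk (leq_ltn_trans (leq_mod _ _) Hi0).
  by rewrite !E !nth_flatten_nseq // szt modn_mod.
Qed.
End Flat.

Lemma balanced_flat k (u : seq bool) : 0 < k ->
  (count_mem true (flatten (nseq k u)) == count_mem false (flatten (nseq k u)))
  = (count_mem true u == count_mem false u).
Proof. by move=> k0; rewrite !count_flatten_nseq eqn_pmul2l. Qed.

Section CardFix.
Variables (N a : nat).
Hypotheses (HN : 0 < N) (Ha : a < N).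
Let g := gcdn a N.
Let k := N %/ g.
Lemma g_gt0 : 0 < g. Proof. by rewrite /g gcdn_gt0 HN orbT. Qed.
Lemma gN : g %| N. Proof. exact: dvdn_gcdr. Qed.
Lemma Nk : k * g = N. Proof. by rewrite /k divnK // gN. Qed.
Lemma k_gt0 : 0 < k. Proof. by rewrite /k divn_gt0 ?g_gt0 // dvdn_leq // gN. Qed.

Definition Ff (u : g.-tuple bool) : N.-tuple bool :=
  insubd (nseq_tuple N false) (flatten (nseq k (val u))).

Lemma Ff_val u : val (Ff u) = flatten (nseq k (val u)).
Proof. by rewrite val_insubd size_flatten_nseq size_tuple Nk eqxx. Qed.

Lemma take_Ff (t : g.-tuple bool) : take g (flatten (nseq k (val t))) = val t.
Proof. by have := @take_flatten_nseq (val t) k k_gt0; rewrite size_tuple. Qed.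

Lemma Ff_inj : injective Ff.
Proof.
move=> u v E; apply: val_inj => /=.
have := congr1 (fun w : N.-tuple bool => take g (val w)) E.
by rewrite /= !Ff_val !take_Ff.
Qed.

Lemma card_fix :
  #|[set w : N.-tuple bool | balanced w && (rot a w == w)]| =
  #|[set u : g.-tuple bool | balanced u]|.
Proof.
rewrite -(card_imset _ Ff_inj).
suff -> : [set w : N.-tuple bool | balanced w && (rot a w == w)] =
  Ff @: [set u : g.-tuple bool | balanced u] by [].
apply/setP => w.
rewrite inE; apply/idP/imsetP.
- move/andP=> [Hb Hr].
  have szw : size w = N by rewrite size_tuple.
  have gle : g <= size w by rewrite szw; apply: dvdn_leq => //; apply: gN.
  have szt : size (take g w) == g by rewrite size_takel.
  have Hw : (w : seq bool) = flatten (nseq k (take g w)).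
    apply/eqP; move: Hr; rewrite (rot_fix_flat false); rewrite ?szw //.
  exists (Tuple szt).
    rewrite inE /balanced /= -(@balanced_flat k _ k_gt0) -Hw; exact: Hb.
  by apply: val_inj; rewrite Ff_val /= -Hw.
- move=> [u]; rewrite inE => Hu ->.
  apply/andP; split; first by rewrite /balanced Ff_val balanced_flat ?k_gt0.
  rewrite (rot_fix_flat false) ?size_flatten_nseq ?size_tuple ?Nk //.
  by rewrite Ff_val -/g -/k take_Ff.
Qed.
End CardFix.

Section Binom.
Variable m : nat.

Definition Gt (A : {set 'I_m}) : m.-tuple bool := [tuple (i \in A) | i < m].

Lemma count_Gt A : count_mem true (Gt A) = #|A|.
Proof.
rewrite /Gt /= count_map enumT cardE /enum_mem size_filter.
by apply: eq_count => i; rewrite /preim /= eqb_id.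
Qed.

Lemma Gt_inj : injective Gt.
Proof.
move=> A B E; apply/setP => i.
by have := congr1 (fun t => tnth t i) E; rewrite /= !tnth_mktuple.
Qed.

Lemma card_count j : #|[set u : m.-tuple bool | count_mem true u == j]| = 'C(m, j).
Proof.
rewrite -[m in 'C(m, _)]card_ord -card_draws -(card_imset _ Gt_inj).
suff -> : [set u : m.-tuple bool | count_mem true u == j] =
  Gt @: [set A : {set 'I_m} | #|A| == j] by [].
apply/setP => u; rewrite inE; apply/idP/imsetP.
- move=> Hu.
  have GtE : Gt [set i | tnth u i] = u.
    by apply: eq_from_tnth => i; rewrite tnth_mktuple inE.
  by exists [set i | tnth u i]; rewrite // inE -count_Gt GtE.
- by move=> [A]; rewrite inE => HA ->; rewrite count_Gt.
Qed.

Lemma balancedE (u : m.-tuple bool) :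
  balanced u = (~~ odd m) && (count_mem true u == m./2).
Proof.
have Hf : count_mem false u = m - count_mem true u.
  have cf : forall s : seq bool, count_mem false s = size s - count_mem true s.
    move=> s; rewrite -(count_predC (pred1 true) s) addKn.
    by apply: eq_count => b; case: b.
  by rewrite cf size_tuple.
rewrite /balanced Hf; set c := count_mem true u.
have cm : c <= m by have := count_size (pred1 true) u; rewrite size_tuple.
apply/idP/andP => [/eqP E | [Ho /eqP E]].
- have Em : m = c.*2 by rewrite -addnn {2}E subnKC.
  by rewrite Em odd_double doubleK.
- have := odd_double_half m; rewrite (negbTE Ho) add0n -E -addnn => Em.
  by rewrite -{1}Em addnK.
Qed.

Lemma card_balanced : 0 < m -> #|[set u : m.-tuple bool | balanced u]| = Scoef m.
Proof.
move=> m0; rewrite /Scoef m0 /=.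
case: ifP => Ho.
- rewrite -card_count.
  suff -> : [set u : m.-tuple bool | balanced u] =
    [set u : m.-tuple bool | count_mem true u == m./2] by [].
  by apply/setP => u; rewrite !inE balancedE Ho.
- suff -> : [set u : m.-tuple bool | balanced u] = set0 by rewrite cards0.
  by apply/setP => u; rewrite !inE balancedE Ho.
Qed.
End Binom.

Lemma sum_mult (P : nat -> nat) n d : 0 < d -> (forall a, ~~ (d %| a) -> P a = 0) ->
  \sum_(0 <= a < n * d) P a = \sum_(0 <= b < n) P (b * d).
Proof.
move=> d0 HP; elim: n => [|n IH]; first by rewrite mul0n !big_geq.
rewrite big_nat_recr //= -IH mulSnr (@big_cat_nat _ _ _ (n * d)) //=; last by rewrite leq_addr.
congr (_ + _); rewrite big_ltn; last by rewrite -{1}(addn0 (n * d)) ltn_add2l.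
rewrite big_nat_cond big1 ?addn0 // => a /andP [/andP [H1 H2] _]; apply: HP.
have E : a = n * d + (a - n * d) by rewrite subnKC // ltnW.
have r0 : 0 < a - n * d by rewrite subn_gt0.
have rd : a - n * d < d by rewrite -(ltn_add2l (n * d)) -E.
rewrite E dvdn_addr ?dvdn_mull //.
by apply/negP => /(dvdn_leq r0); rewrite leqNgt rd.
Qed.

Lemma count_gcd N n : 0 < N -> 0 < n -> n %| N ->
  \sum_(a < N) (gcdn a N == N %/ n) = totient n.
Proof.
move=> N0 n0 nN.
have EN : N = n * (N %/ n) by rewrite mulnC divnK.
have d0 : 0 < N %/ n by rewrite divn_gt0 // dvdn_leq.
move: (N %/ n) EN d0 => d EN d0; subst N.
rewrite -(big_mkord xpredT (fun a => nat_of_bool (gcdn a (n * d) == d))).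
rewrite sum_mult //; last first.
  by move=> a Ha; apply/eqP; rewrite eqb0; apply: contra Ha => /eqP <-; apply: dvdn_gcdl.
rewrite totient_count_coprime; apply: eq_bigr => b _.
by rewrite -muln_gcdl -{2}(mul1n d) eqn_pmul2r // coprime_sym.
Qed.

Lemma sum_gcd (F : nat -> nat) N : 0 < N ->
  \sum_(a < N) F (gcdn a N) =
  \sum_(n < N.+1 | (0 < n) && (n %| N)) totient n * F (N %/ n).
Proof.
move=> N0.
transitivity (\sum_(n < N.+1 | (0 < n) && (n %| N))
   \sum_(a < N) (gcdn a N == N %/ n) * F (N %/ n)); last first.
  apply: eq_bigr => n /andP [n0 nN]; rewrite -big_distrl /= count_gcd //.
rewrite exchange_big /=; apply: eq_bigr => a _.
set g := gcdn a N.
have g0 : 0 < g by rewrite gcdn_gt0 N0 orbT.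
have gN : g %| N by apply: dvdn_gcdr.
have n0lt : N %/ g < N.+1 by rewrite ltnS leq_div.
have Hc : (0 < N %/ g) && (N %/ g %| N).
  rewrite divn_gt0 // dvdn_div // andbT; exact: dvdn_leq.
rewrite (bigD1 (Ordinal n0lt)) //= divnA // mulKn // eqxx mul1n.
rewrite big1 ?addn0 // => n /andP [/andP [n0 nN] nne].
case E : (g == N %/ n); last by rewrite mul0n.
exfalso; move/negP: nne; apply; apply/eqP; apply: val_inj => /=.
by rewrite (eqP E) divnA // mulKn.
Qed.

Section Act.
Variable n : nat.
Definition rta (w : n.+1.-tuple bool) (a : 'I_n.+1) : n.+1.-tuple bool := rot_tuple a w.

Lemma rta1 : rta^~ 1%g =1 id.
Proof. by move=> w; apply: val_inj; rewrite /= rot0. Qed.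

Lemma rtaM w : act_morph rta w.
Proof.
move=> a b; apply: val_inj => /=.
have Ha : (a <= size w)%N by rewrite size_tuple ltnW.
have Hb : (b <= size w)%N by rewrite size_tuple ltnW.
rewrite (rot_add_mod Ha Hb) size_tuple (addnC b).
case: ltngtP => H.
- by rewrite modn_small.
- have H' := ltnW H.
  rewrite -{1}(subnK H') modnDr modn_small //.
  rewrite ltn_subLR // -addSn leq_add // ltnW //.
- by rewrite H modnn rot0 -[X in rot X _](size_tuple w) rot_size.
Qed.
End Act.

Section Burn.
Variable n : nat.
Definition rtact := TotalAction (@rta1 n) (@rtaM n).
Definition Sb := [set w : n.+1.-tuple bool | balanced w].

Lemma rtact_acts : [acts [set: 'I_n.+1], on Sb | rtact].
Proof.
apply/actsP => a _ w; rewrite !inE /balanced /=.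
have P : perm_eq (rot a w) w by rewrite perm_rot.
by rewrite !(seq.permP P).
Qed.

Lemma neck_orbit w : necklace_of w = orbit rtact [set: 'I_n.+1] w.
Proof.
apply/setP => x; apply/imsetP/imsetP => [[i _ ->]|[i _ ->]]; by exists i.
Qed.

Lemma bn_orb : balanced_necklaces n.+1 = orbit rtact [set: 'I_n.+1] @: Sb.
Proof.
apply/setP => X; apply/imsetP/imsetP => [[w Hw ->]|[w Hw ->]]; exists w;
  rewrite ?neck_orbit //; move: Hw; by rewrite !inE.
Qed.

Lemma burnside :
  (n.+1 * Ccoef n.+1 = \sum_(a in [set: 'I_n.+1]) #|('Fix_(Sb | rtact)[a])%g|)%N.
Proof.
rewrite (Frobenius_Cauchy rtact_acts) cardsT card_ord mulnC /Ccoef bn_orb //.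
Qed.
End Burn.

Lemma part2 N : (0 < N)%N ->
  (N * Ccoef N = \sum_(n < N.+1 | (0 < n) && (n %| N)) totient n * Scoef (N %/ n))%N.
Proof.
case: N => // n _; rewrite burnside -(sum_gcd Scoef) //.
apply: eq_big => [a|a _]; first by rewrite inE.
have Ha : (a < n.+1)%N by [].
have g0 : (0 < gcdn a n.+1)%N by rewrite gcdn_gt0 orbT.
rewrite -(@card_balanced _ g0) -(@card_fix n.+1 a isT Ha).
suff -> : ('Fix_(Sb n | rtact n)[a])%g =
   [set w : n.+1.-tuple bool | balanced w && (rot a w == w)] by [].
apply/setP => w; rewrite !inE; congr (_ && _).
by rewrite sub1set inE.
Qed.

Section RatPart.
Local Open Scope ring_scope.
Lemma ratid (f c n p : nat) :
  (f%:R / n%:R) * ((1 / (2 * p)%:R) * c%:R) = ((f * c)%:R / (n * (2 * p))%:R : rat).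
Proof.
rewrite !natrM !invfM mul1r -!mulrA; congr (_ * _).
by rewrite [RHS]mulrC -!mulrA.
Qed.

Lemma inner N n : (0 < N)%N ->
  \sum_(p < N.+1)
     (if [&& (0 < n)%N, (0 < p)%N & (2 * n * p == N)%N] then
         ((totient n)%:R / (n%:R)) * ((1 / (2 * p)%:R) * ('C(2 * p, p))%:R)
       else 0 : rat)
  = if (0 < n)%N && (n %| N)%N then (totient n * Scoef (N %/ n))%:R / N%:R else 0.
Proof.
move=> N0.
case n0 : (0 < n)%N; last by rewrite big1 // => p _.
rewrite /=.
case H2 : (2 * n %| N)%N.
- set p0 := (N %/ (2 * n))%N.
  have EN : N = (2 * n * p0)%N by rewrite mulnC divnK.
  have p0pos : (0 < p0)%N by rewrite lt0n; apply/eqP => E; move: N0; rewrite EN E muln0.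
  have p0lt : (p0 < N.+1)%N by rewrite ltnS leq_div.
  have nN : (n %| N)%N by rewrite EN mulnC mulnA dvdn_mull.
  have Nn : (N %/ n = 2 * p0)%N by rewrite EN (mulnC 2) -mulnA mulKn.
  rewrite nN Nn /Scoef muln_gt0 p0pos /=.
  have -> : (~~ odd (2 * p0)) = true by rewrite mul2n odd_double.
  have -> : ((2 * p0)./2 = p0)%N by rewrite mul2n doubleK.
  rewrite (bigD1 (Ordinal p0lt)) /= ?p0pos -?EN ?eqxx //.
  rewrite big1 ?addr0; last first.
    move=> p /= Hp; case: ifP => // /andP [_ /eqP E]; exfalso.
    move/negP: Hp; apply; apply/eqP; apply: val_inj => /=.
    by apply/eqP; rewrite -(eqn_pmul2l (_ : 0 < 2 * n)%N) ?muln_gt0 ?n0 // E -EN.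
  by rewrite ratid EN (mulnC 2 n) -mulnA.
- rewrite big1; last first.
    move=> p _; case: ifP => // /andP [_ /eqP E].
    have : (2 * n %| 2 * n * p)%N by apply: dvdn_mulr.
    by rewrite E H2.
  case nN : (n %| N)%N => //=.
  rewrite /Scoef; case: ifP => [/andP [_ Ho]|]; last by rewrite muln0 mul0r.
  exfalso; move: H2; rewrite -(divnK nN).
  have := odd_double_half (N %/ n); rewrite (negbTE Ho) add0n => <-.
  by rewrite -mul2n mulnAC dvdn_mulr.
Qed.

End RatPart.

Theorem mainTheorem4 (N : nat) (HN : (0 < N)%N) :
  ((Ccoef N)%:R : rat) =
    (\sum_(n < N.+1) \sum_(p < N.+1)
       if [&& (0 < n)%N, (0 < p)%N & (2 * n * p == N)%N] then
         ((totient n)%:R / (n%:R)) * ((1 / (2 * p)%:R) * ('C(2 * p, p))%:R)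
       else 0)%R
  /\
  (N * Ccoef N =
     \sum_(n < N.+1 | (0 < n) && (n %| N)) totient n * Scoef (N %/ n))%N.
Proof.
split; last exact: part2.
rewrite (eq_bigr _ (fun (n : 'I_N.+1) _ => @inner N n HN)) -big_mkcond /=.
rewrite -mulr_suml -natr_sum -part2 // natrM [(N%:R * _)%R]mulrC mulfK //.
by rewrite pnatr_eq0 -lt0n.
Qed.
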